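(* Let $n\in\mathbb{N}_{\ge1}$ and $r',P>1$. There exists a self-attention layer $\mathcal F^{(max)}_{SA}:\mathbb{R}^{3\times n}\to\mathbb{R}^{3\times n}$ with head number $1$, head size $3$ and weight bound $\frac12\log(8n^{3/2}r'P)$ such that for any $\boldsymbol x=(x_1,\dots,x_n)\in\mathbb{R}^{1\times n}$ satisfying $|x_i|\le2r'$ for all $i\in[n]$ and $x_i\le x_{\max}-2$ for every $i$ with $x_i\ne x_{\max}$ (where $x_{\max}=\max_ix_i$), $$\mathcal F^{(max)}_{SA}\begin{pmatrix}\boldsymbol x\\ \boldsymbol 1_{1\times n}\\ \boldsymbol 0_{1\times n}\end{pmatrix}=\begin{pmatrix}\boldsymbol x\\ \boldsymbol 1_{1\times n}\\ \widetilde x_{\max}\boldsymbol 1_{1\times n}\end{pmatrix}$$ for some $\widetilde x_{\max}$ with $x_{\max}-\frac{1}{2P\sqrt n}\le\widetilde x_{\max}\le x_{\max}$. In particular, $\mathcal F^{(max)}_{SA}$ maps $\begin{pmatrix}\boldsymbol 0_{1\times n}\\ \boldsymbol 1_{1\times n}\\ \boldsymbol 0_{1\times n}\end{pmatrix}$ to itself.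
   Context: A self-attention layer on $\mathbb{R}^{D\times n}$ with head number $H$ and head size $S$ is $X\mapsto X+\sum_{h=1}^HW_O^{(h)}W_V^{(h)}X\sigma_S(X^\top W_K^{(h)\top}W_Q^{(h)}X)$ with $W_O^{(h)}\in\mathbb{R}^{D\times S}$, $W_V^{(h)},W_K^{(h)},W_Q^{(h)}\in\mathbb{R}^{S\times D}$, where $\sigma_S$ is the column-wise softmax $[\sigma_S(\boldsymbol z)]_i=e^{z_i}/\sum_je^{z_j}$. Its weight bound is the maximum absolute value of the entries of all these matrices. *)

(* Defs.v *)
From HB Require Import structures.
From mathcomp Require Import all_boot all_order all_algebra.
From mathcomp Require Import all_classical all_reals all_analysis.
Set Implicit Arguments. Unset Strict Implicit. Unset Printing Implicit Defensive.
Import Order.TTheory GRing.Theory Num.Theory.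
Local Open Scope ring_scope.

Definition softmax_col (R : realType) (n : nat) (Z : 'M[R]_n) : 'M[R]_n :=
  \matrix_(i < n, j < n) (expR (Z i j) / \sum_(k < n) expR (Z k j)).

Definition self_attn (R : realType) (D n H S : nat)
  (WO : 'I_H -> 'M[R]_(D, S)) (WV WK WQ : 'I_H -> 'M[R]_(S, D))
  (X : 'M[R]_(D, n)) : 'M[R]_(D, n) :=
  X + \sum_(h < H) (WO h *m WV h *m X *m
                    softmax_col (X^T *m (WK h)^T *m WQ h *m X)).

Definition weight_bounded (R : realType) (D H S : nat)
  (WO : 'I_H -> 'M[R]_(D, S)) (WV WK WQ : 'I_H -> 'M[R]_(S, D)) (B : R) : Prop :=
  (forall h i j, `|WO h i j| <= B) /\ (forall h i j, `|WV h i j| <= B) /\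
  (forall h i j, `|WK h i j| <= B) /\ (forall h i j, `|WQ h i j| <= B).

Definition stack3 (R : realType) (n : nat) (a b c : 'rV[R]_n) : 'M[R]_(3, n) :=
  \matrix_(i < 3, j < n)
    (if (i : nat) == 0%N then a 0 j else if (i : nat) == 1%N then b 0 j else c 0 j).

(* Main.v *)
Require Import Defs.
From HB Require Import structures.
From mathcomp Require Import all_boot all_order all_algebra.
From mathcomp Require Import all_classical all_reals all_analysis.
From mathcomp Require Import ring lra.
Import Order.TTheory GRing.Theory Num.Theory.
Local Open Scope ring_scope.

Section S.
Variables (R : realType) (n : nat) (B : R).

Definition WOm : 'M[R]_(3,3) := \matrix_(a < 3, b < 3) (if ((a:nat) == 2%N) then 2^-1 else 0).
Definition WVm : 'M[R]_(3,3) := \matrix_(a < 3, b < 3) (if ((b:nat) == 0%N) then 3^-1 * 2 else 0).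
Definition WKm : 'M[R]_(3,3) := \matrix_(a < 3, b < 3) (if ((b:nat) == 0%N) then B else 0).
Definition WQm : 'M[R]_(3,3) := \matrix_(a < 3, b < 3) (if ((b:nat) == 1%N) then 3^-1 else 0).

Lemma sum3 (F : 'I_3 -> R) : \sum_(i < 3) F i = F 0 + F 1 + F 2.
Proof. rewrite !big_ord_recl big_ord0 addr0 addrA; congr (F _ + F _ + F _); exact: val_inj. Qed.

Lemma scoresE (x : 'rV[R]_n) :
  (stack3 x (const_mx 1) 0)^T *m WKm^T *m WQm *m (stack3 x (const_mx 1) 0)
  = \matrix_(k < n, j < n) (B * x 0 k).
Proof.
apply/matrixP => k j; rewrite !mxE sum3 !mxE !sum3 !mxE !sum3 !mxE /=.
lra.
Qed.

Lemma OVXE (x : 'rV[R]_n) :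
  WOm *m WVm *m (stack3 x (const_mx 1) 0)
  = \matrix_(i < 3, k < n) (if (i : nat) == 2%N then x 0 k else 0).
Proof.
apply/matrixP => i k; rewrite !mxE sum3 !mxE !sum3 !mxE /=.
case: i => [[|[|[|i]]] Hi] //=; lra.
Qed.
Definition wts (x : 'rV[R]_n) (k : 'I_n) : R :=
  expR (B * x 0 k) / \sum_(l < n) expR (B * x 0 l).

Lemma attnE (x : 'rV[R]_n) :
  self_attn (fun _ : 'I_1 => WOm) (fun _ => WVm) (fun _ => WKm) (fun _ => WQm)
    (stack3 x (const_mx 1) 0)
  = stack3 x (const_mx 1) (const_mx (\sum_k x 0 k * wts x k)).
Proof.
rewrite /self_attn big_ord1 scoresE OVXE.
apply/matrixP => i j; rewrite !mxE.
under eq_bigr do rewrite !mxE.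
have H0 : forall c : R, c + \sum_(k < n) 0 * wts x k = c.
  by move=> c; rewrite big1 ?addr0 // => k _; rewrite mul0r.
have H2 : \sum_(k < n) x 0 k * wts x k = \sum_(k < n) x 0 k * (expR (B * x 0 k) /
      \sum_(l < n) expR ((\matrix_(k0 < n, _ < n) (B * x 0 k0)) l j)).
  by apply: eq_bigr => k _; congr (_ * (_ / _)); apply: eq_bigr => l _; rewrite mxE.
rewrite H2.
case: i => [[|[|[|i]]] Hi] //=.
- by rewrite big1 ?addr0 // => k _; rewrite mul0r.
- by rewrite big1 ?addr0 // => k _; rewrite mul0r.
- by rewrite add0r.
Qed.
End S.

Lemma wavg_bound (R : realType) (n : nat) (B r' : R) (x : 'rV[R]_n) (xmax : R) :
  0 <= B ->
  (exists i, x 0 i = xmax) -> (forall i, x 0 i <= xmax) ->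
  (forall i, `|x 0 i| <= 2 * r') ->
  (forall i, x 0 i != xmax -> x 0 i <= xmax - 2) ->
  let xt := \sum_(k < n) x 0 k * (expR (B * x 0 k) / \sum_(l < n) expR (B * x 0 l)) in
  xt <= xmax /\ xmax - xt <= (4 * r' * expR (- (2 * B))) *+ n.
Proof.
move=> B0 [i0 xi0] xle xabs xgap xt.
set D := \sum_(l < n) expR (B * x 0 l).
have D1 : expR (B * xmax) <= D.
  rewrite /D (bigD1 i0) //= xi0 lerDl; apply: sumr_ge0 => l _; exact: expR_ge0.
have D0 : 0 < D by apply: lt_le_trans D1; exact: expR_gt0.
have sw : \sum_(k < n) expR (B * x 0 k) / D = 1.
  by rewrite -mulr_suml mulfV // gt_eqF.
have diff : xmax - xt = \sum_(k < n) (xmax - x 0 k) * (expR (B * x 0 k) / D).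
  rewrite /xt -{1}(mulr1 xmax) -sw mulr_sumr -sumrB.
  by apply: eq_bigr => k _; rewrite mulrBl.
have tge0 : forall k, 0 <= (xmax - x 0 k) * (expR (B * x 0 k) / D).
  move=> k; apply: mulr_ge0; first by rewrite subr_ge0.
  by apply: divr_ge0; [exact: expR_ge0 | exact: ltW].
split.
  rewrite -subr_ge0 diff; exact: sumr_ge0.
rewrite diff -[X in _ <= _ *+ X]card_ord -sumr_const; apply: ler_sum => k _.
have r0 : 0 <= 4 * r' * expR (- (2 * B)).
  apply: mulr_ge0; last exact: expR_ge0.
  by have := xabs k; have := normr_ge0 (x 0 k); lra.
case: (eqVneq (x 0 k) xmax) => [->|ne]; first by rewrite subrr mul0r.
have g := xgap k ne.
have wle : expR (B * x 0 k) / D <= expR (- (2 * B)).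
  apply: le_trans (_ : expR (B * x 0 k) / expR (B * xmax) <= _).
    apply: ler_wpM2l; first exact: expR_ge0.
    by rewrite lef_pV2 ?posrE ?expR_gt0.
  rewrite -expRB ler_expR; nra.
have dle : xmax - x 0 k <= 4 * r'.
  have := xabs k; rewrite ler_norml => /andP[a b].
  have := xabs i0; rewrite ler_norml xi0 => /andP[c d]; lra.
apply: le_trans (_ : (xmax - x 0 k) * expR (- (2 * B)) <= _).
  by apply: ler_wpM2l => //; lra.
by apply: ler_wpM2r => //; exact: expR_ge0.
Qed.

Lemma exp43 (R : realType) : expR (4%:R * 3^-1) <= 8 :> R.
Proof.
rewrite expRM_natl.
set e := expR (3^-1 : R).
have y1 : 1 - 3^-1 <= expR (- 3^-1 : R) := expR_ge1Dx _.
have ey : e * expR (- 3^-1) = 1 := expRxMexpNx_1 _.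
have e0 : 0 < e := expR_gt0 _.
have e32 : e <= 3 / 2 by nra.
have : e ^+ 4 <= (3/2) ^+ 4 by rewrite lerXn2r // ?nnegrE; lra.
lra.
Qed.

Theorem lemma18 (R : realType) (n : nat) (r' P : R) :
  (1 <= n)%N -> 1 < r' -> 1 < P ->
  exists (WO : 'I_1 -> 'M[R]_(3, 3)) (WV WK WQ : 'I_1 -> 'M[R]_(3, 3)),
    weight_bounded WO WV WK WQ
      (2^-1 * ln (8 * (n%:R * Num.sqrt (n%:R)) * r' * P)) /\
    (forall (x : 'rV[R]_n) (xmax : R),
       (exists i, x 0 i = xmax) -> (forall i, x 0 i <= xmax) ->
       (forall i, `|x 0 i| <= 2 * r') ->
       (forall i, x 0 i != xmax -> x 0 i <= xmax - 2) ->
       exists xt : R,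
         self_attn WO WV WK WQ (stack3 x (const_mx 1) 0)
           = stack3 x (const_mx 1) (const_mx xt) /\
         xmax - (2 * P * Num.sqrt (n%:R))^-1 <= xt /\ xt <= xmax) /\
    self_attn WO WV WK WQ (stack3 (0 : 'rV[R]_n) (const_mx 1) 0)
      = stack3 (0 : 'rV[R]_n) (const_mx 1) 0.
Proof.
move=> n1 r1 P1.
set s := Num.sqrt (n%:R : R).
set A := 8 * (n%:R * s) * r' * P.
set B := 2^-1 * ln A.
have n1R : 1 <= n%:R :> R by rewrite ler1n.
have s1 : 1 <= s.
  apply: le_trans (_ : Num.sqrt 1 <= _); first by rewrite sqrtr1.
  by rewrite ler_sqrt.
have ss : s * s = n%:R by rewrite -expr2 sqr_sqrtr ?ler0n.
have A8 : 8 <= A.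
  rewrite /A; have m1 : 1 <= n%:R * s by nra.
  have h1 : 8 <= 8 * (n%:R * s) by lra.
  have h2 : 8 <= 8 * (n%:R * s) * r' by nra.
  nra.
have A0 : 0 < A by lra.
have B23 : 2 / 3 <= B.
  have : 4%:R * 3^-1 <= ln A.
    by rewrite -ler_expR lnK ?posrE //; apply: le_trans (exp43 R) A8.
  rewrite /B; lra.
exists (fun _ => WOm R), (fun _ => WVm R), (fun _ => @WKm R B), (fun _ => WQm R).
split.
  rewrite /weight_bounded /=.
  split; [|split; [|split]] => h i j; rewrite !mxE; case: ifP => _;
    rewrite ?normr0; try lra; rewrite ger0_norm; lra.
split.
  move=> x xmax ex xle xabs xgap.
  exists (\sum_k x 0 k * @wts R n B x k); split; first exact: attnE.
  have B0 : 0 <= B by lra.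
  have [h1 h2] := @wavg_bound R n B r' x xmax B0 ex xle xabs xgap.
  split; last exact: h1.
  have eB : expR (- (2 * B)) = A^-1.
    by rewrite expRN /B mulrA divff ?mul1r ?lnK ?posrE // pnatr_eq0.
  rewrite eB in h2.
  have : (4 * r' * A^-1) *+ n = (2 * P * s)^-1.
    rewrite -mulr_natr /A -ss; field.
    have ns : s != 0 by rewrite gt_eqF //; lra.
    have nP : P != 0 by rewrite gt_eqF //; lra.
    have nr : r' != 0 by rewrite gt_eqF //; lra.
    by rewrite ns nP nr.
  move=> e; rewrite e in h2; rewrite /wts; lra.
rewrite (attnE R n B 0); congr stack3; apply/matrixP => i j; rewrite !mxE.
by rewrite big1 // => k _; rewrite mxE mul0r.
Qed.
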